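(* Let $A$ be a transitive permutation group on a finite set $\Omega_1$ and $B$ a transitive permutation group on a finite set $\Omega_2$, where $\Omega_1$ and $\Omega_2$ are disjoint. Let $N_A \trianglelefteq A$ and $N_B \trianglelefteq B$ be normal subgroups, and let $\phi \colon A/N_A \to B/N_B$ be a group isomorphism. Define \[ C=\{(a,b)\in A\times B : \phi(aN_A)=bN_B\}, \] regarded as a permutation group on $\Omega_1 \sqcup \Omega_2$, where $(a,b)$ acts as $a$ on $\Omega_1$ and as $b$ on $\Omega_2$. Call $N_A$ an essential kernel in $A$ if there is no proper transitive subgroup $M<A$ (transitive on $\Omega_1$) such that $N_A M=A$. If $N_A$ is not an essential kernel in $A$, then $C$ is not minimal as a two-orbit permutation group on $\Omega_1 \sqcup \Omega_2$; that is, $C$ has a proper subgroup that is transitive on both $\Omega_1$ and $\Omega_2$.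
   Context: A two-orbit permutation group $P$ acting on $\Omega = \Omega_1 \sqcup \Omega_2$ (with orbits $\Omega_1$ and $\Omega_2$) is called minimal if it has no proper subgroup that is transitive on both $\Omega_1$ and $\Omega_2$. The group $C$ in the statement projects surjectively onto $A$ and onto $B$ and therefore has exactly the two orbits $\Omega_1$ and $\Omega_2$. *)

(* Defs.v *)
From HB Require Import structures.
From mathcomp Require Import all_boot all_fingroup.
Set Implicit Arguments. Unset Strict Implicit. Unset Printing Implicit Defensive.
Local Open Scope group_scope.

Section SumPerm.
Variables (T1 T2 : finType).

Definition sum_fun (a : {perm T1}) (b : {perm T2}) (z : T1 + T2) : T1 + T2 :=
  match z with inl x => inl (a x) | inr y => inr (b y) end.

Lemma sum_fun_inj a b : injective (sum_fun a b).
Proof.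
by case=> [x|y] [x'|y'] //= [] /perm_inj ->.
Qed.

Definition sum_perm a b : {perm (T1 + T2)} := perm (@sum_fun_inj a b).

Definition Omega1 : {set T1 + T2} := [set inl x | x : T1].
Definition Omega2 : {set T1 + T2} := [set inr y | y : T2].

Definition fibre_prod (A : {group {perm T1}}) (B : {group {perm T2}})
  (NA : {group {perm T1}}) (NB : {group {perm T2}})
  (phi : {morphism (A / NA) >-> coset_of NB}) : {set {perm (T1 + T2)}} :=
  [set sum_perm ab.1 ab.2 | ab in setX A B & phi (coset NA ab.1) == coset NB ab.2].

End SumPerm.
Arguments fibre_prod {T1 T2} A B NA NB phi.

Definition essential_kernel (T : finType) (A N : {group {perm T}}) : Prop :=
  ~ exists M : {group {perm T}},
      [/\ M \proper A, [transitive M, on [set: T] | 'P] & N * M = A].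

(* Main.v *)
Require Import Defs.
From mathcomp Require Import all_boot all_fingroup.
From Stdlib Require Import Classical.
Local Open Scope group_scope.

Lemma sum_permE (T1 T2 : finType) (a : {perm T1}) (b : {perm T2}) z :
  sum_perm a b z = sum_fun a b z.
Proof. by rewrite permE. Qed.

Lemma sum_permM (T1 T2 : finType) (a a' : {perm T1}) (b b' : {perm T2}) :
  sum_perm (a * a') (b * b') = sum_perm a b * sum_perm a' b'.
Proof. by apply/permP => -[x|y]; rewrite permM !sum_permE /= !permM. Qed.

Lemma sum_perm_inj1 (T1 T2 : finType) (a a' : {perm T1}) (b b' : {perm T2}) :
  sum_perm a b = sum_perm a' b' -> a = a'.
Proof.
move=> E; apply/permP => x.
by move: (congr1 (fun p : {perm (T1 + T2)} => p (inl x)) E); rewrite !sum_permE /= => -[].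
Qed.

Theorem mainTheorem1 (T1 T2 : finType)
  (A NA : {group {perm T1}}) (B NB : {group {perm T2}})
  (transA : [transitive A, on [set: T1] | 'P])
  (transB : [transitive B, on [set: T2] | 'P])
  (nNA : NA <| A) (nNB : NB <| B)
  (phi : {morphism (A / NA) >-> coset_of NB})
  (isophi : isom (A / NA) (B / NB) phi) :
  ~ essential_kernel A NA ->
  exists M : {group {perm (T1 + T2)}},
    [/\ M \proper fibre_prod A B NA NB phi,
        [transitive M, on Omega1 T1 T2 | 'P] &
        [transitive M, on Omega2 T1 T2 | 'P]].
Proof.
move=> /NNPP [M [prMA trM defA]].
have sMA : M \subset A by case/properP: prMA.
have nA : A \subset 'N(NA) by case/andP: nNA.
have cA : forall a, a \in A -> coset NA a \in A / NA by move=> a aA; apply: mem_quotient.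
have surj : forall b, b \in B -> exists2 a, a \in A & phi (coset NA a) = coset NB b.
  move=> b bB; have: coset NB b \in B / NB by apply: mem_quotient.
  rewrite -(isom_im isophi); case/morphimP => x _ xA ->.
  case/morphimP: xA => a _ aA ->; by exists a.
have img : forall a, a \in A -> exists2 b, b \in B & phi (coset NA a) = coset NB b.
  move=> a aA; have: phi (coset NA a) \in phi @* (A / NA) by apply: mem_morphim; apply: cA.
  rewrite (isom_im isophi); case/morphimP => b _ bB ->; by exists b.
pose S : {set {perm (T1 + T2)}} :=
  [set sum_perm ab.1 ab.2 | ab in setX M B & phi (coset NA ab.1) == coset NB ab.2].
have memS : forall a b, a \in M -> b \in B -> phi (coset NA a) = coset NB b ->
    sum_perm a b \in S.
  move=> a b aM bB E; apply/imsetP; exists (a, b) => //.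
  by rewrite inE /= in_setX aM bB E eqxx.
have SP : forall g, g \in S -> exists a b, [/\ a \in M, b \in B,
    phi (coset NA a) = coset NB b & g = sum_perm a b].
  move=> g /imsetP [[a b]]; rewrite inE /= in_setX => /andP [/andP [aM bB] /eqP E] ->.
  by exists a, b.
have gS : group_set S.
  apply/group_setP; split.
    have -> : (1 : {perm (T1 + T2)}) = sum_perm 1 1.
      by apply/permP => -[x|y]; rewrite sum_permE /= !perm1.
    by apply: memS; rewrite ?group1 // !morph1.
  move=> g h /SP [a [b [aM bB Ea ->]]] /SP [a' [b' [aM' bB' Ea' ->]]].
  rewrite -sum_permM; apply: memS; rewrite ?groupM //.
  have aA := subsetP sMA _ aM; have aA' := subsetP sMA _ aM'.
  rewrite morphM; try exact: (subsetP nA).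
  by rewrite morphM ?cA // Ea Ea' morphM ?(subsetP (normal_norm nNB)).
exists (Group gS); split.
- apply/properP; split.
    apply/subsetP => g /SP [a [b [aM bB E ->]]]; apply/imsetP; exists (a, b) => //.
    by rewrite inE /= in_setX (subsetP sMA) // bB E eqxx.
  case/properP: prMA => _ [a aA aM].
  have [b bB E] := img a aA.
  exists (sum_perm a b).
    apply/imsetP; exists (a, b) => //.
    by rewrite inE /= in_setX aA bB E eqxx.
  apply/negP => /SP [a' [b' [aM' _ _ /sum_perm_inj1 Eq]]].
  by move: aM; rewrite Eq aM'.
- case/imsetP: trM => x0 _ Ex0.
  apply/imsetP; exists (inl x0); first by apply/imsetP; exists x0.
  apply/setP => z; apply/idP/idP.
    case/imsetP => x _ ->; have: x \in orbit 'P M x0 by rewrite -Ex0 inE.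
    case/orbitP => m mM <-; have [b bB E] := img m (subsetP sMA _ mM).
    apply/orbitP; exists (sum_perm m b); first exact: memS.
    by rewrite /= !apermE sum_permE.
  case/orbitP => g /SP [a [b [aM _ _ ->]]] <-.
  by rewrite /= !apermE sum_permE; apply/imsetP; exists (a x0).
- case/imsetP: transB => y0 _ Ey0.
  apply/imsetP; exists (inr y0); first by apply/imsetP; exists y0.
  apply/setP => z; apply/idP/idP.
    case/imsetP => y _ ->; have: y \in orbit 'P B y0 by rewrite -Ey0 inE.
    case/orbitP => b bB <-; have [a aA E] := surj b bB.
    move: aA; rewrite -defA => /mulsgP [n m nN mM Ea].
    apply/orbitP; exists (sum_perm m b); last by rewrite /= !apermE sum_permE.
    by apply: memS => //; rewrite -E Ea coset_kerl.
  case/orbitP => g /SP [a [b [_ _ _ ->]]] <-.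
  by rewrite /= !apermE sum_permE; apply/imsetP; exists (b y0).
Qed.
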